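(* Let $\mathbf H\subset GL_m(\mathbb C)$ be a finite unitary group and $\mathbf G=\mathbf H\wr\mathrm{Sym}_n$ acting on $\mathbb C^{mn}$, with the subgroup sequence, coset leaders and initial vector described in the context. Then the subgroup decoding algorithm decodes robustly.
   Context: $\mathbf G$ is the group of $mn\times mn$ block permutation matrices with nonzero $m\times m$ blocks in $\mathbf H$; elements written $\sigma(h_1,\dots,h_n)$. Subgroups: $\mathbf G_0=\{I\}$, $\mathbf G_{2l-1}=(\mathbf H\wr\mathrm{Sym}_l)\oplus\{I_{m(n-l)}\}$ ($1\le l\le n$), $\mathbf G_{2l}=(\mathbf H\wr\mathrm{Sym}_l)\oplus\mathbf H\oplus\{I_{m(n-l-1)}\}$ ($1\le l\le n-1$), so $\mathbf G_{2n-1}=\mathbf G$. Coset leaders: $\operatorname{CL}(\mathbf G_1/\mathbf G_0)=\mathbf G_1$; $\operatorname{CL}(\mathbf G_{2l}/\mathbf G_{2l-1})=\{(1,\dots,1,h,1,\dots,1):h\in\mathbf H\text{ in slot }l+1\}$; $\operatorname{CL}(\mathbf G_{2l+1}/\mathbf G_{2l})=\{(j\ j{+}1\ \cdots\ l{+}1):1\le j\le l+1\}$ (block permutation cycles). Initial vector $\mathbf x_0=(u_1\mathbf v_0,\dots,u_n\mathbf v_0)$, where $\mathbf v_0\in\mathbb C^m$ is a unit vector such that the identity is the unique $h\in\mathbf H$ minimizing $\|h\mathbf v_0-\mathbf v_0\|$, and $0<u_1<\cdots<u_n$ are reals with $\|\mathbf x_0\|=1$. $S=\operatorname{Stab}_{\mathbf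 G}(\mathbf x_0)$. Subgroup decoding algorithm: $\mathbf r_0=\mathbf r$; for $k=1,\dots,2n-1$ choose $d_k\in\operatorname{CL}(\mathbf G_k/\mathbf G_{k-1})$ minimizing $\|a\mathbf r_{k-1}-\mathbf x_0\|$ (ties broken by a fixed ordering), $\mathbf r_k=d_k\mathbf r_{k-1}$; output $d_{2n-1}\cdots d_1$. It decodes robustly if for all $g\in\mathbf G$ and $\mathbf r$ with $\|\mathbf r-g^{-1}\mathbf x_0\|<\|\mathbf r-h^{-1}\mathbf x_0\|$ for all $h\notin Sg$, the output lies in $Sg$. *)

(* Defs.v *)
From mathcomp Require Import all_boot all_algebra all_fingroup.
From mathcomp Require Import reals complex.
From mathcomp Require Import zify.
Set Implicit Arguments. Unset Strict Implicit. Unset Printing Implicit Defensive.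
Import GRing.Theory Num.Theory.
Local Open Scope ring_scope.

(* The block cycle (j j+1 ... l) on 0-based block indices: j -> j+1 -> ... -> l -> j.
   (In the paper's 1-based notation this is (j+1 j+2 ... l+1).) *)
Definition cyc_nat (j l i : nat) : nat :=
  if (j <= i)%N && (i < l)%N then i.+1 else if i == l then j else i.

Lemma cyc_nat_inj (j l : nat) : (j <= l)%N -> injective (cyc_nat j l).
Proof.
move=> jl i1 i2; rewrite /cyc_nat.
by repeat (case: ifP => ?); lia.
Qed.

Definition cycf (n j l : nat) (i : 'I_n) : 'I_n :=
  if (j <= l)%N && (l < n)%N then insubd i (cyc_nat j l i) else i.

Lemma cycf_inj (n j l : nat) : injective (@cycf n j l).
Proof.
move=> i1 i2; rewrite /cycf; case: ifP => // /andP[jl ln] e.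
have lt : forall i : 'I_n, (cyc_nat j l i < n)%N.
  by move=> i; rewrite /cyc_nat; have := ltn_ord i; repeat (case: ifP => ?); lia.
apply: val_inj; apply: (cyc_nat_inj jl).
by move/(congr1 val): e; rewrite !val_insubd !lt.
Qed.

Section Wreath.
Variables (R : realType) (m n : nat).
Local Notation C := R[i].

(* Vectors of C^{mn}, written blockwise as (x_1, ..., x_n) with x_i in C^m. *)
Definition vec := 'I_n -> 'cV[C]_m.

(* Element sigma(h_1,...,h_n) of the block permutation group; it acts by the
   block permutation matrix with block (i, sigma^-1 i) equal to h_i, i.e.
   (g x)_i = h_i x_{sigma^-1 i}: block i of x is moved to position sigma i. *)
Definition elt := ({perm 'I_n} * {ffun 'I_n -> 'M[C]_m})%type.

Definition act (g : elt) (x : vec) : vec := fun i => g.2 i *m x (g.1^-1%g i).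

Definition eone : elt := (1%g, [ffun => 1%:M]).
(* product corresponding to the matrix product: act (emul g1 g2) = act g1 \o act g2 *)
Definition emul (g1 g2 : elt) : elt :=
  ((g2.1 * g1.1)%g, [ffun i => g1.2 i *m g2.2 (g1.1^-1%g i)]).
Definition einv (g : elt) : elt := (g.1^-1%g, [ffun j => invmx (g.2 (g.1 j))]).

Definition vsub (x y : vec) : vec := fun i => x i - y i.

Definition cnorm (v : 'cV[C]_m) : C := sqrtC (\sum_(k < m) `|v k 0| ^+ 2).
Definition vnorm (x : vec) : C := sqrtC (\sum_(i < n) \sum_(k < m) `|x i k 0| ^+ 2).

Definition ctmx (A : 'M[C]_m) : 'M[C]_m := (map_mx Num.conj A)^T.

Definition inG (H : seq 'M[C]_m) (g : elt) : Prop := forall i, g.2 i \in H.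

Definition slot (l : nat) (h : 'M[C]_m) : {ffun 'I_n -> 'M[C]_m} :=
  [ffun i : 'I_n => if val i == l then h else 1%:M].

Definition cycp (j l : nat) : {perm 'I_n} := perm (@cycf_inj n j l).

(* Coset leaders CL(G_k / G_{k-1}), k = 1, ..., 2n-1:
   k = 1      : G_1 = {(h,1,...,1) : h in H}
   k = 2l     : {(1,..,1,h,1,..,1) : h in H}, h in slot l+1 (1-based) = l (0-based)
   k = 2l+1>1 : {(j j+1 ... l+1) : 1 <= j <= l+1} (1-based)
                = {(j ... l) : 0 <= j <= l} (0-based), l = k./2. *)
Definition inCL (H : seq 'M[C]_m) (k : nat) (d : elt) : Prop :=
  if odd k && (1 < k)%N
  then exists2 j : nat, (j <= k./2)%N & d = (cycp j k./2, [ffun => 1%:M])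
  else exists2 h, h \in H & d = (1%g, slot k./2 h).

Definition stab (H : seq 'M[C]_m) (x0 : vec) (g : elt) : Prop :=
  inG H g /\ act g x0 = x0.

Definition pickmin (f : elt -> C) (s : seq elt) : elt :=
  nth eone s (find (fun a => all (fun b => f a <= f b) s) s).

(* The subgroup decoding algorithm; ordr k is the fixed ordering of
   CL(G_k/G_{k-1}) used to break ties.  Returns d_{2n-1} ... d_1. *)
Definition decode (ordr : nat -> seq elt) (x0 r : vec) : elt :=
  (foldl (fun st k =>
     let d := pickmin (fun a => vnorm (vsub (act a st.1) x0)) (ordr k) in
     (act d st.1, emul d st.2))
   (r, eone) (iota 1 (2 * n - 1))).2.

Definition decodes_robustly (H : seq 'M[C]_m) (ordr : nat -> seq elt) (x0 : vec) : Prop :=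
  forall (g : elt) (r : vec), inG H g ->
    (forall h : elt, inG H h -> ~ (exists2 s, stab H x0 s & h = emul s g) ->
       vnorm (vsub r (act (einv g) x0)) < vnorm (vsub r (act (einv h) x0))) ->
    exists2 s, stab H x0 s & decode ordr x0 r = emul s g.

End Wreath.

(* Main.v *)
Require Import Defs.
From mathcomp Require Import all_boot all_algebra all_fingroup.
From mathcomp Require Import reals complex.
From mathcomp Require Import all_order ring zify.
From Stdlib Require Import FunctionalExtensionality.
Set Implicit Arguments. Unset Strict Implicit. Unset Printing Implicit Defensive.
Import Order.TTheory GRing.Theory Num.Theory.
Local Open Scope ring_scope.

Section Alg.
Variables (R : realType) (m : nat).
Local Notation C := R[i].
Local Notation M := 'M[C]_m.
Local Notation V := 'cV[C]_m.

Definition dotc (v w : V) : C := \sum_(k < m) (w k 0)^* * v k 0.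
Definition nb (v : V) : C := \sum_(k < m) `|v k 0| ^+ 2.
Definition ipr (v w : V) : C := dotc v w + dotc w v.

Lemma nbE v : nb v = dotc v v.
Proof. by apply: eq_bigr => k _; rewrite normCK mulrC. Qed.

Lemma nb_ge0 v : 0 <= nb v.
Proof. by apply: sumr_ge0 => k _; rewrite exprn_ge0. Qed.

Lemma dotcE v w : dotc v w = ((map_mx Num.conj w)^T *m v) 0 0.
Proof. by rewrite mxE; apply: eq_bigr => k _; rewrite !mxE. Qed.

Lemma dotc_unitary (h : M) v w : h *m ctmx h = 1%:M ->
  dotc (h *m v) (h *m w) = dotc v w.
Proof.
move=> /mulmx1C hu; rewrite !dotcE map_mxM trmx_mul -mulmxA (mulmxA _ h).
by move: hu; rewrite /ctmx => ->; rewrite mul1mx.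
Qed.

Lemma nb_unitary (h : M) v : h *m ctmx h = 1%:M -> nb (h *m v) = nb v.
Proof. by move=> hu; rewrite !nbE dotc_unitary. Qed.

Lemma nbB v w : nb (v - w) = nb v + nb w - ipr v w.
Proof.
rewrite /ipr !nbE /dotc -!big_split -sumrB /=; apply: eq_bigr => k _.
by rewrite !mxE rmorphB /=; ring.
Qed.

Lemma dotcZl (c : C) v w : dotc (c *: v) w = c * dotc v w.
Proof. by rewrite /dotc mulr_sumr; apply: eq_bigr => k _; rewrite !mxE; ring. Qed.

Lemma dotcZr (c : C) v w : c^* = c -> dotc v (c *: w) = c * dotc v w.
Proof.
by move=> cr; rewrite /dotc mulr_sumr; apply: eq_bigr => k _; rewrite !mxE rmorphM /= cr; ring.
Qed.

Lemma nbZ (c : C) v : c^* = c -> nb (c *: v) = c ^+ 2 * nb v.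
Proof. by move=> cr; rewrite !nbE dotcZl dotcZr // mulrA expr2. Qed.

Lemma nbBZ (a : C) y q : a^* = a -> nb q = 1 ->
  nb (y - a *: q) = nb y + a ^+ 2 - a * ipr y q.
Proof.
move=> ar nq; rewrite nbB nbZ // nq mulr1 /ipr dotcZl dotcZr //.
by ring.
Qed.

End Alg.
Global Opaque nb ipr dotc.

Section Vec.
Variables (R : realType) (m n : nat).
Local Notation C := R[i].
Local Notation M := 'M[C]_m.
Local Notation V := 'cV[C]_m.
Local Notation vec := (vec R m n).
Local Notation elt := (elt R m n).
Local Notation act := (@Defs.act R m n).

Definition Dd (y z : vec) : C := \sum_(i < n) nb (y i - z i).

Lemma vnormE (y z : vec) : vnorm (vsub y z) = sqrtC (Dd y z).
Proof. by []. Qed.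

Lemma Dd_ge0 y z : 0 <= Dd y z.
Proof. by apply: sumr_ge0 => i _; apply: nb_ge0. Qed.

Lemma act_emul (d e : elt) x : act (emul d e) x = act d (act e x).
Proof.
apply: functional_extensionality_dep => i.
by rewrite /Defs.act /emul /= ffunE invMg permM mulmxA.
Qed.

Lemma act_eone x : act (eone R m n) x = x.
Proof.
by apply: functional_extensionality_dep => i; rewrite /Defs.act /= ffunE invg1 perm1 mul1mx.
Qed.

Lemma Dd_act (d : elt) y z : (forall i, d.2 i *m ctmx (d.2 i) = 1%:M) ->
  Dd (act d y) (act d z) = Dd y z.
Proof.
move=> du; rewrite /Dd /act.
rewrite (reindex_inj (@perm_inj _ d.1)) /=.
apply: eq_bigr => i _; rewrite permK -mulmxBr nb_unitary //.
Qed.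

Lemma pickminP (f : elt -> C) s : s != [::] -> (forall a, a \in s -> 0 <= f a) ->
  pickmin f s \in s /\ forall b, b \in s -> f (pickmin f s) <= f b.
Proof.
move=> sn0 fge.
have [a [ains amin]] : exists a, a \in s /\ forall b, b \in s -> f a <= f b.
  elim: s sn0 fge => [//|x s IH] _ fge.
  case: (altP (s =P [::])) => [->|sn0].
    by exists x; split; rewrite ?mem_head // => b; rewrite inE => /eqP ->.
  have [a' [a's a'min]] := IH sn0 (fun a ha => fge a (mem_behead (s := x :: s) ha)).
  have := ger_leVge (fge x (mem_head _ _)) (fge a' (mem_behead (s := x :: s) a's)).
  case/orP=> le.
    exists x; split; first exact: mem_head.
    move=> b; rewrite inE => /orP[/eqP ->//|bs]; exact: le_trans le (a'min b bs).
  exists a'; split; first exact: (mem_behead (s := x :: s)).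
  by move=> b; rewrite inE => /orP[/eqP ->//|bs]; exact: a'min.
have hasP : has (fun a => all (fun b => f a <= f b) s) s.
  by apply/hasP; exists a => //; apply/allP => b bs; exact: amin.
rewrite /pickmin; split; first by rewrite mem_nth // -has_find.
move=> b bs; have := nth_find (eone R m n) hasP => /allP; exact.
Qed.

End Vec.

Section Main.
Variables (R : realType) (m n : nat).
Local Notation C := R[i].
Local Notation M := 'M[C]_m.
Local Notation V := 'cV[C]_m.
Local Notation vec := (vec R m n).
Local Notation elt := (elt R m n).
Local Notation act := (@Defs.act R m n).
Variables (H : seq M) (v0 : V) (u : 'I_n -> C).
Hypothesis H1 : 1%:M \in H.
Hypothesis HM : forall a b, a \in H -> b \in H -> a *m b \in H.
Hypothesis HV : forall a, a \in H -> invmx a \in H.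
Hypothesis HU : forall a, a \in H -> a *m ctmx a = 1%:M.
Hypothesis Hv0 : cnorm v0 = 1.
Hypothesis Huniq : forall h, h \in H -> h != 1%:M ->
  cnorm (1%:M *m v0 - v0) < cnorm (h *m v0 - v0).
Hypothesis Hupos : forall i, 0 < u i.
Hypothesis Huinc : forall i j : 'I_n, (i < j)%N -> u i < u j.
Hypothesis Hn : (0 < n)%N.

Lemma nbv0 : nb v0 = 1.
Proof. by rewrite -[nb v0]sqrtCK; move: Hv0; rewrite /cnorm => ->; rewrite expr1n. Qed.

Lemma unitH a : a \in H -> a \in unitmx.
Proof. by move=> /HU /mulmx1_unit []. Qed.

Lemma stabH a : a \in H -> a *m v0 = v0 -> a = 1%:M.
Proof.
move=> aH av; apply/eqP; apply/negPn/negP => /(Huniq aH).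
by rewrite av mul1mx ltxx.
Qed.

Lemma eqH a b : a \in H -> b \in H -> a *m v0 = b *m v0 -> a = b.
Proof.
move=> aH bH e.
have : invmx b *m a = 1%:M.
  by apply: stabH; [apply: HM => //; apply: HV | rewrite -mulmxA e mulmxA mulVmx ?unitH // mul1mx].
by move=> e1; rewrite -(mulKVmx (unitH bH) a) e1 mulmx1.
Qed.

Lemma ureal i : (u i)^* = u i.
Proof. exact: geC0_conj (ltW (Hupos i)). Qed.

Lemma u_inj : injective u.
Proof.
move=> i j e; apply/eqP; case: (ltngtP i j) => [ij|ji|/val_inj ->//].
  by have := Huinc ij; rewrite e ltxx.
by have := Huinc ji; rewrite e ltxx.
Qed.

Lemma nbH a : a \in H -> nb (a *m v0) = 1.
Proof. by move=> aH; rewrite nb_unitary ?nbv0 // HU. Qed.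

Definition P (t : {perm 'I_n}) (b : 'I_n -> M) : vec :=
  fun i => u (t i) *: (b i *m v0).

Definition inorb (b : 'I_n -> M) := forall i, b i \in H.

Lemma P_inj t b t' b' : inorb b -> inorb b' -> P t b = P t' b' ->
  t = t' /\ forall i, b i = b' i.
Proof.
move=> bH b'H e.
have key i : t i = t' i /\ b i = b' i.
  have ei : P t b i = P t' b' i by rewrite e.
  move: ei; rewrite /P => ei.
  have : nb (u (t i) *: (b i *m v0)) = nb (u (t' i) *: (b' i *m v0)) by rewrite ei.
  rewrite !nbZ ?ureal // !nbH // !mulr1 => /eqP.
  rewrite eqrXn2 ?ltW ?Hupos // => /eqP /u_inj tt; split => //.
  move: ei; rewrite tt => /scalerI ei; apply: eqH => //; apply: ei.
  by rewrite gt_eqF ?Hupos.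
split; last by move=> i; case: (key i).
by apply/permP => i; case: (key i).
Qed.

Lemma P_ext t b b' : (forall i, b i = b' i) -> P t b = P t b'.
Proof. by move=> e; apply: functional_extensionality_dep => i; rewrite /P e. Qed.

Lemma actP (d : elt) t b :
  act d (P t b) = P (d.1^-1 * t)%g (fun i => d.2 i *m b (d.1^-1%g i)).
Proof.
apply: functional_extensionality_dep => i.
by rewrite /Defs.act /P permM -scalemxAr mulmxA.
Qed.

Definition VOR (y z : vec) := forall t b, inorb b -> P t b <> z -> Dd y z < Dd y (P t b).

Lemma inG_unit (d : elt) : inG H d -> forall i, d.2 i *m ctmx (d.2 i) = 1%:M.
Proof. by move=> dG i; apply: HU. Qed.

Lemma VOR_act (d : elt) y t b : inG H d -> inorb b -> VOR y (P t b) ->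
  VOR (act d y) (act d (P t b)).
Proof.
move=> dG bH vor t'' b'' b''H ne.
pose w := P (d.1 * t'')%g (fun i => invmx (d.2 (d.1 i)) *m b'' (d.1 i)).
have aw : act d w = P t'' b''.
  rewrite /w actP mulKg; apply: P_ext => i.
  by rewrite permKV mulmxA mulmxV ?unitH ?mul1mx.
have wH : inorb (fun i => invmx (d.2 (d.1 i)) *m b'' (d.1 i)).
  by move=> i; apply: HM => //; apply: HV.
rewrite -aw !(Dd_act _ _ (inG_unit dG)).
have := vor (d.1 * t'')%g _ wH; apply => e; apply: ne; by rewrite -aw /w e.
Qed.

Definition one : 'I_n -> M := fun _ => 1%:M.
Lemma oneH : inorb one. Proof. by move=> i. Qed.

Lemma x0E : (fun i => u i *: v0) = P 1%g one.
Proof. by apply: functional_extensionality_dep => i; rewrite /P perm1 mul1mx. Qed.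

Lemma stab_triv (s : elt) : stab H (P 1%g one) s -> s.1 = 1%g /\ forall i, s.2 i = 1%:M.
Proof.
move=> [sG sx]; move: sx; rewrite actP => e.
have [] := P_inj _ oneH e.
  by move=> i; apply: HM => //; apply: sG.
rewrite mulg1 => /(congr1 (fun x => x^-1)%g); rewrite invgK invg1 => ->.
by move=> h; split => // i; have := h i; rewrite /one mulmx1.
Qed.


Local Notation x0 := (fun i : 'I_n => u i *: v0).

Lemma big2 (F : 'I_n -> C) io jo : io != jo ->
  \sum_i F i = F io + F jo + \sum_(i | (i != io) && (i != jo)) F i.
Proof.
move=> ne; rewrite (bigD1 io) //= (bigD1 jo) /=; last by rewrite eq_sym.
by rewrite addrA.
Qed.

Lemma big1' (F : 'I_n -> C) io :
  \sum_i F i = F io + \sum_(i | i != io) F i.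
Proof. by rewrite (bigD1 io). Qed.

Lemma nbHy h y (c : C) : h \in H ->
  nb (h *m y - c *: v0) = nb (y - c *: (invmx h *m v0)).
Proof.
move=> hH; rewrite -(nb_unitary (y - c *: (invmx h *m v0)) (HU hH)).
by rewrite mulmxBr -scalemxAr mulmxA mulmxV ?unitH // mul1mx.
Qed.

Lemma nbv0E y i : nb (y - u i *: v0) = nb y + u i ^+ 2 - u i * ipr y v0.
Proof. by rewrite nbBZ ?ureal ?nbv0. Qed.


Lemma sum2_diff (F G : 'I_n -> C) io jo : io != jo ->
  (forall i, i != io -> i != jo -> F i = G i) ->
  \sum_i F i - \sum_i G i = F io + F jo - (G io + G jo).
Proof.
move=> ne e; rewrite (big2 F ne) (big2 G ne).
rewrite (eq_bigr G); last by move=> i /andP[a b]; apply: e.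
by ring.
Qed.

Lemma sum1_diff (F G : 'I_n -> C) io :
  (forall i, i != io -> F i = G i) ->
  \sum_i F i - \sum_i G i = F io - G io.
Proof.
move=> e; rewrite (big1' F io) (big1' G io).
rewrite (eq_bigr G); last by move=> i a; apply: e.
by ring.
Qed.

Lemma Dd_diff2 (y z z' : vec) io jo : io != jo ->
  (forall i, i != io -> i != jo -> z i = z' i) ->
  Dd y z - Dd y z' = nb (y io - z io) + nb (y jo - z jo) - (nb (y io - z' io) + nb (y jo - z' jo)).
Proof.
move=> ne e; rewrite /Dd.
exact: (sum2_diff (F := fun i => nb (y i - z i)) (G := fun i => nb (y i - z' i)) ne (fun i a b => congr1 (fun w => nb (y i - w)) (e i a b))).
Qed.

Lemma Dd_diff1 (y z z' : vec) io :
  (forall i, i != io -> z i = z' i) ->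
  Dd y z - Dd y z' = nb (y io - z io) - nb (y io - z' io).
Proof.
move=> e; rewrite /Dd.
exact: (sum1_diff (F := fun i => nb (y i - z i)) (G := fun i => nb (y i - z' i)) (fun i a => congr1 (fun w => nb (y i - w)) (e i a))).
Qed.

Lemma vor_swap y t b io jo : inorb b -> VOR y (P t b) -> io != jo ->
  b io = 1%:M -> b jo = 1%:M ->
  0 < (u (t io) - u (t jo)) * (ipr (y io) v0 - ipr (y jo) v0).
Proof.
move=> bH vor ne bi bj.
pose t2 := (tperm io jo * t)%g.
have t2i : t2 io = t jo by rewrite /t2 permM tpermL.
have t2j : t2 jo = t io by rewrite /t2 permM tpermR.
have ne2 : P t2 b <> P t b.
  move=> e; have [et _] := P_inj bH bH e.
  by move: t2i; rewrite et => /perm_inj eij; move: ne; rewrite eij eqxx.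
have := vor _ _ bH ne2; rewrite -subr_gt0 (Dd_diff2 _ ne).
  rewrite /P t2i t2j bi bj mul1mx !nbv0E.
  set a := u (t io); set c := u (t jo).
  set p := ipr (y io) v0; set q := ipr (y jo) v0; set N1 := nb (y io); set N2 := nb (y jo).
  by congr (0 < _); ring.
by move=> i ni nj; rewrite /P /t2 permM tpermD // eq_sym.
Qed.

Lemma cycpE j l (i : 'I_n) : (j <= l)%N -> (l < n)%N ->
  val (cycp n j l i) = cyc_nat j l i.
Proof.
move=> jl ln; rewrite /cycp permE /cycf jl ln /= val_insubd.
have -> : (cyc_nat j l i < n)%N.
  by rewrite /cyc_nat; have := ltn_ord i; repeat (case: ifP => ?); lia.
done.
Qed.

Definition Gc (c : {perm 'I_n}) (y : vec) := \sum_i nb (y i - u (c i) *: v0).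

Lemma Dd_cyc y (c : {perm 'I_n}) : Dd (act ((c, [ffun => 1%:M]) : elt) y) x0 = Gc c y.
Proof.
rewrite /Dd /Gc (reindex_inj (@perm_inj _ c)) /=.
by apply: eq_bigr => i _; rewrite /Defs.act /= ffunE mul1mx permK.
Qed.

Lemma Gc_diff2 (c c' : {perm 'I_n}) y io jo : io != jo ->
  (forall i, i != io -> i != jo -> c i = c' i) ->
  Gc c y - Gc c' y = nb (y io - u (c io) *: v0) + nb (y jo - u (c jo) *: v0)
    - (nb (y io - u (c' io) *: v0) + nb (y jo - u (c' jo) *: v0)).
Proof.
move=> ne e; rewrite /Gc.
exact: (sum2_diff (F := fun i => nb (y i - u (c i) *: v0)) (G := fun i => nb (y i - u (c' i) *: v0)) ne (fun i a b => congr1 (fun w => nb (y i - u w *: v0)) (e i a b))).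
Qed.

Lemma cyc_step y (jo j1o lo : 'I_n) : (j1o : nat) = (jo : nat).+1 -> (jo < lo)%N ->
  Gc (cycp n jo lo) y - Gc (cycp n j1o lo) y
   = - ((u j1o - u jo) * (ipr (y jo) v0 - ipr (y lo) v0)).
Proof.
move=> e1 jl.
have ln := ltn_ord lo.
have ne : jo != lo by apply/eqP => e; move: jl; rewrite e ltnn.
rewrite (Gc_diff2 y ne); last first.
  move=> i ni nl; apply: ord_inj.
  have ni' : nat_of_ord i <> nat_of_ord jo by move=> e; move/eqP: ni; apply; apply: val_inj.
  have nl' : nat_of_ord i <> nat_of_ord lo by move=> e; move/eqP: nl; apply; apply: val_inj.
  rewrite !cycpE; try lia.
  by rewrite /cyc_nat; repeat (case: ifP => ?); lia.
have c1 : cycp n jo lo jo = j1o.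
  by apply: ord_inj; rewrite cycpE /cyc_nat; try lia; repeat (case: ifP => ?); lia.
have c2 : cycp n jo lo lo = jo.
  by apply: ord_inj; rewrite cycpE /cyc_nat; try lia; repeat (case: ifP => ?); lia.
have c3 : cycp n j1o lo jo = jo.
  by apply: ord_inj; rewrite cycpE /cyc_nat; try lia; repeat (case: ifP => ?); lia.
have c4 : cycp n j1o lo lo = j1o.
  by apply: ord_inj; rewrite cycpE /cyc_nat; try lia; repeat (case: ifP => ?); lia.
rewrite c1 c2 c3 c4 !nbv0E.
set a := u j1o; set c := u jo.
set p := ipr (y jo) v0; set q := ipr (y lo) v0; set N1 := nb (y jo); set N2 := nb (y lo).
by ring.
Qed.

Lemma act_slot y (lo : 'I_n) h i :
  act ((1%g, slot n lo h) : elt) y i = (if i == lo then h else 1%:M) *m y i.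
Proof.
have ii : (1%g : {perm 'I_n})^-1%g i = i by rewrite invg1 perm1.
by rewrite /Defs.act /= ffunE ii.
Qed.

Lemma Dd_slot y (lo : 'I_n) h h' :
  Dd (act ((1%g, slot n lo h) : elt) y) x0 - Dd (act ((1%g, slot n lo h') : elt) y) x0 =
  nb (h *m y lo - u lo *: v0) - nb (h' *m y lo - u lo *: v0).
Proof.
rewrite /Dd.
rewrite (sum1_diff (F := fun i => nb (act ((1%g, slot n lo h) : elt) y i - u i *: v0))
   (G := fun i => nb (act ((1%g, slot n lo h') : elt) y i - u i *: v0)) (io := lo)).
  by rewrite !act_slot eqxx.
by move=> i ni; rewrite !act_slot (negbTE ni).
Qed.

Lemma align y t b (lo : 'I_n) h : inorb b -> VOR y (P t b) -> h \in H ->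
  Dd (act ((1%g, slot n lo h) : elt) y) x0 <=
  Dd (act ((1%g, slot n lo (invmx (b lo))) : elt) y) x0 ->
  h *m b lo = 1%:M.
Proof.
move=> bH vor hH.
rewrite -subr_le0 Dd_slot subr_le0.
rewrite (nbHy _ _ hH) (nbHy _ _ (HV (bH lo))) invmxK.
rewrite !nbBZ ?ureal ?nbH ?HV //.
rewrite lerD2l lerN2 ler_pM2l ?Hupos // => le.
have ih : invmx h = b lo.
  apply/eqP; apply/negPn/negP => ne.
  pose b2 := fun i => if i == lo then invmx h else b i.
  have b2H : inorb b2 by move=> i; rewrite /b2; case: ifP => _; [apply: HV|].
  have neP : P t b2 <> P t b.
    move=> e; have [_ eb] := P_inj b2H bH e; move: (eb lo); rewrite /b2 eqxx => e'.
    by rewrite e' eqxx in ne.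
  have := vor _ _ b2H neP.
  rewrite -subr_gt0 (@Dd_diff1 y (P t b2) (P t b) lo); last first.
    by move=> i ni; rewrite /P /b2 (negbTE ni).
  rewrite subr_gt0 /P /b2 eqxx !nbBZ ?ureal ?nbH ?HV //.
  rewrite ltrD2l ltrN2 ltr_pM2l ?Hupos // => lt.
  by have := le_lt_trans le lt; rewrite ltxx.
by rewrite -ih mulmxV ?unitH.
Qed.


Variable ordr : nat -> seq elt.
Hypothesis Hordr : forall k, (1 <= k <= 2 * n - 1)%N ->
     uniq (ordr k) /\ (forall d, d \in ordr k <-> inCL H k d).

Definition stepF (st : vec * elt) (k : nat) : vec * elt :=
  let d := pickmin (fun a => vnorm (vsub (act a st.1) x0)) (ordr k) in
  (act d st.1, emul d st.2).

Definition Aa k := if k == 0%N then 0%N else k.+2./2.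
Definition Ss k := k.+1./2.

Definition Inv (z0 : vec) k (st : vec * elt) :=
  exists t b, inorb b /\ act st.2 z0 = P t b /\ VOR st.1 (P t b) /\ inG H st.2 /\
    (forall i : 'I_n, (i < Aa k)%N -> b i = 1%:M) /\
    (forall i j : 'I_n, (i < j)%N -> (j < Ss k)%N -> (t i < t j)%N).

Lemma Inv_new z0 k st (d : elt) t b t' b' : inorb b -> act st.2 z0 = P t b ->
  VOR st.1 (P t b) -> inG H st.2 -> inG H d ->
  t' = (d.1^-1 * t)%g -> (forall i, b' i = d.2 i *m b (d.1^-1%g i)) ->
  (forall i : 'I_n, (i < Aa k)%N -> b' i = 1%:M) ->
  (forall i j : 'I_n, (i < j)%N -> (j < Ss k)%N -> (t' i < t' j)%N) ->
  Inv z0 k (act d st.1, emul d st.2).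
Proof.
move=> bH ez vor DG dG et eb al so; exists t', b'; do !split => //=.
- by move=> i; rewrite eb; apply: HM => //.
- by rewrite act_emul ez actP et; apply: P_ext => i; rewrite eb.
- have := VOR_act dG bH vor; rewrite actP -et.
  by rewrite (P_ext _ (b' := b')) // => i; rewrite eb.
- by move=> i; rewrite /emul /= ffunE; apply: HM.
Qed.

Lemma step z0 k st : (k.+1 <= 2 * n - 1)%N -> Inv z0 k st -> Inv z0 k.+1 (stepF st k.+1).
Proof.
move=> kn [t [b [bH [ez [vor [DG [al so]]]]]]].
have [_ memd] := Hordr (k := k.+1) (ltac:(lia)).
pose f := fun a : elt => vnorm (vsub (act a st.1) x0).
have fge a : a \in ordr k.+1 -> 0 <= f a by move=> _; rewrite /f vnormE sqrtC_ge0 Dd_ge0.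
pose l := k.+1./2.
have ln : (l < n)%N by rewrite /l; lia.
pose lo := Ordinal ln.
have ne : ordr k.+1 != [::].
  apply/eqP => e.
  case: (boolP (odd k.+1 && (1 < k.+1)%N)) => c.
    have : ((cycp n 0 l, [ffun => 1%:M]) : elt) \in ordr k.+1.
      by apply/(memd _).2; rewrite /inCL c; exists 0%N.
    by rewrite e.
  have : ((1%g, slot n l 1%:M) : elt) \in ordr k.+1.
    by apply/(memd _).2; rewrite /inCL (negbTE c); exists 1%:M.
  by rewrite e.
have [dmem dmin] := pickminP ne fge.
have dmin' a : a \in ordr k.+1 ->
    Dd (act (pickmin f (ordr k.+1)) st.1) x0 <= Dd (act a st.1) x0.
  move=> ain; have := dmin a ain.
  by rewrite /f !vnormE ler_sqrtC // nnegrE Dd_ge0.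
have dCL := (memd _).1 dmem.
rewrite /stepF -/f.
move: dCL dmin'; set d := pickmin f (ordr k.+1) => dCL dmin'.
set y := st.1 in vor dmin' *.
move: dCL; rewrite /inCL; case: ifP => c.
-
  case=> j jl de.
  have dG : inG H d by rewrite de => i /=; rewrite ffunE.
  have l1 : (1 <= l)%N by rewrite /l; lia.
  have Aak : Aa k = l.+1 by rewrite /Aa /l; case: ifP => /eqP; lia.
  have Ssk : Ss k = l by rewrite /Ss /l; lia.
  have jn : (j < n)%N by lia.
  pose jo := Ordinal jn.
  have b1 : forall i : 'I_n, (i <= l)%N -> b i = 1%:M by move=> i il; apply: al; lia.
  have sole : forall x y : 'I_n, (x <= y)%N -> (y < l)%N -> (t x <= t y)%N.
    move=> x z xz zl; case: (ltngtP x z) => [xz'|zx|/ord_inj ->//]; last by lia.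
    by apply: ltnW; apply: so => //; lia.
  have F1 : (j < l)%N -> (t lo < t jo)%N.
    move=> jl'.
    have j1n : (j.+1 < n)%N by lia.
    pose j1o := Ordinal j1n.
    have ain : ((cycp n j.+1 l, [ffun => 1%:M]) : elt) \in ordr k.+1.
      by apply/(memd _).2; rewrite /inCL c; exists j.+1.
    have := dmin' _ ain; rewrite de !Dd_cyc -subr_le0.
    rewrite (@cyc_step y jo j1o lo erefl jl') oppr_le0 pmulr_rge0; last first.
      by rewrite subr_gt0; apply: Huinc => /=.
    move=> W.
    case: (ltngtP (t lo) (t jo)) => [//|h|e]; last first.
      by have := congr1 val (perm_inj (ord_inj e)) => /=; lia.
    have njl : jo != lo by apply/eqP => /(congr1 val) /=; lia.
    have := vor_swap bH vor njl (b1 jo (ltnW jl')) (b1 lo (leqnn l)).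
    rewrite nmulr_rgt0; last by rewrite subr_lt0; apply: Huinc.
    by move=> lt; have := le_lt_trans W lt; rewrite ltxx.
  have F2 : forall jmo : 'I_n, (jmo : nat).+1 = j -> (t jmo < t lo)%N.
    move=> jmo ej.
    have ain : ((cycp n jmo l, [ffun => 1%:M]) : elt) \in ordr k.+1.
      by apply/(memd _).2; rewrite /inCL c; exists (nat_of_ord jmo) => //; lia.
    have jl' : (jmo < lo)%N by rewrite /=; lia.
    have := dmin' _ ain; rewrite de !Dd_cyc -subr_ge0.
    rewrite (@cyc_step y jmo jo lo (esym ej) jl') oppr_ge0 pmulr_rle0; last first.
      by rewrite subr_gt0; apply: Huinc => /=; lia.
    rewrite subr_le0 => W.
    case: (ltngtP (t jmo) (t lo)) => [//|h|e]; last first.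
      by have := congr1 val (perm_inj (ord_inj e)) => /=; lia.
    have njl : lo != jmo by apply/eqP => /(congr1 val) /=; lia.
    have := vor_swap bH vor njl (b1 lo (leqnn l)) (b1 jmo (ltnW jl')).
    rewrite nmulr_rgt0; last by rewrite subr_lt0; apply: Huinc.
    by rewrite subr_lt0 => lt; have := le_lt_trans W lt; rewrite ltxx.
  set cc := cycp n j l.
  have cE : forall x : 'I_n, nat_of_ord (cc x) = cyc_nat j l x.
    by move=> x; rewrite /cc cycpE //; lia.
  have cinv : forall x : 'I_n, (x <= l)%N -> (cc^-1%g x <= l)%N.
    move=> x xl; rewrite leqNgt; apply/negP => gt.
    have := cE (cc^-1%g x); rewrite permKV /cyc_nat.
    by repeat (case: ifP => ?); lia.
  apply: (Inv_new (t := t) (b := b) (d := d) (t' := (cc^-1 * t)%g)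
            (b' := fun i => 1%:M *m b (cc^-1%g i))) => //.
  + by rewrite de.
  + by move=> i; rewrite de /= ffunE.
  + move=> i ia; rewrite mul1mx; apply: b1; apply: cinv; move: ia; rewrite /Aa (_ : (k.+1 == 0%N) = false) // /l; lia.
  + move=> i i' ii' iS; rewrite !permM.
    have iS' : (i' <= l)%N by move: iS; rewrite /Ss /l; lia.
    have ea := cE (cc^-1%g i); rewrite permKV in ea.
    have ea' := cE (cc^-1%g i'); rewrite permKV in ea'.
    have al2 := cinv i (ltnW (leq_trans ii' iS')).
    have al2' := cinv i' iS'.
    move: ea ea' al2 al2'; set a := cc^-1%g i; set a' := cc^-1%g i' => ea ea' al2 al2'.
    case: (ltngtP a l) => [alt|agt|ael]; [|by move: agt al2; lia|].
    * case: (ltngtP a' l) => [alt'|agt'|ael'].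
      - apply: so => //.
        by move: ea ea'; rewrite /cyc_nat; repeat (case: ifP => ?); lia.
      - by move: agt' al2'; lia.
      - have aE' : a' = lo by apply: ord_inj; rewrite ael'.
        rewrite aE'.
        have j0 : (0 < j)%N by move: ea ea'; rewrite /cyc_nat ael'; repeat (case: ifP => ?); lia.
        have jmn : (j.-1 < n)%N by lia.
        have := F2 (Ordinal jmn) ltac:(simpl; lia).
        apply: leq_ltn_trans; apply: sole => /=.
          by move: ea ea'; rewrite /cyc_nat ael'; repeat (case: ifP => ?); lia.
        lia.
    * have aE : a = lo by apply: ord_inj; rewrite ael.
      rewrite aE.
      case: (ltngtP a' l) => [alt'|agt'|ael'].
      - have jl' : (j < l)%N by move: ea ea'; rewrite /cyc_nat ael; repeat (case: ifP => ?); lia.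
        apply: (leq_trans (F1 jl')); apply: sole => //=.
        by move: ea ea'; rewrite /cyc_nat ael; repeat (case: ifP => ?); lia.
      - by move: agt' al2'; lia.
      - by move: ea ea'; rewrite ael ael'; lia.
-
  case=> h hH de.
  have ii1 : forall i : 'I_n, (1%g : {perm 'I_n})^-1%g i = i by move=> i; rewrite invg1 perm1.
  have dG : inG H d by rewrite de => i /=; rewrite ffunE; case: ifP.
  have ain : ((1%g, slot n l (invmx (b lo))) : elt) \in ordr k.+1.
    by apply/(memd _).2; rewrite /inCL c; exists (invmx (b lo)) => //; apply: HV.
  have hb : h *m b lo = 1%:M.
    apply: (align bH vor hH); move: (dmin' _ ain); by rewrite de.
  apply: (Inv_new (t := t) (b := b) (b' := fun i => (if i == lo then h else 1%:M) *m b i)) => //.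
  + by move=> i; rewrite de /= ffunE ii1.
  + move=> i ia; case: ifP => [/eqP ->//|/negbT nil]; rewrite mul1mx; apply: al.
    have : nat_of_ord i <> l by move=> e; move: nil; rewrite -(inj_eq val_inj) /= e eqxx.
    have c' : ~~ odd k.+1 \/ (k.+1 <= 1)%N by move/negbT: c; rewrite negb_and -leqNgt => /orP.
    move: ia; rewrite /Aa (_ : (k.+1 == 0%N) = false) // /l; case: eqP => k0; lia.
  + move=> i j' ij jS; rewrite de !permM /= !ii1; apply: so => //.
    have c' : ~~ odd k.+1 \/ (k.+1 <= 1)%N by move/negbT: c; rewrite negb_and -leqNgt => /orP.
    move: jS ij; rewrite /Ss; lia.
Qed.

Lemma iterInv z0 k st0 : (k <= 2 * n - 1)%N -> Inv z0 0 st0 ->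
  Inv z0 k (foldl stepF st0 (iota 1 k)).
Proof.
elim: k => [//|k IH] kn I0.
have -> : iota 1 k.+1 = iota 1 k ++ [:: k.+1] by rewrite -(addn1 k) iotaD add1n addn1.
rewrite foldl_cat /=.
by apply: step => //; apply: IH => //; lia.
Qed.

Lemma perm_inc_id (t : {perm 'I_n}) :
  (forall i j : 'I_n, (i < j)%N -> (t i < t j)%N) -> t = 1%g.
Proof.
move=> inc.
have ge : forall f : {perm 'I_n}, (forall i j : 'I_n, (i < j)%N -> (f i < f j)%N) ->
    forall i : 'I_n, (i <= f i)%N.
  move=> f finc.
  suff: forall k (i : 'I_n), nat_of_ord i = k -> (k <= f i)%N by move=> h i; exact: h.
  elim=> [//|k IH] i ei.
  have kn : (k < n)%N by have := ltn_ord i; lia.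
  have := IH (Ordinal kn) erefl.
  have := finc (Ordinal kn) i ltac:(simpl; lia).
  lia.
have inc' : forall i j : 'I_n, (i < j)%N -> (t^-1%g i < t^-1%g j)%N.
  move=> i j ij; case: (ltngtP (t^-1%g i) (t^-1%g j)) => // [h|h].
    by have := inc _ _ h; rewrite !permKV; lia.
  by have := congr1 t (ord_inj h); rewrite !permKV => e; rewrite e ltnn in ij.
apply/permP => i; apply: ord_inj; rewrite perm1.
by have := ge t inc i; have := ge _ inc' (t i); rewrite permK; lia.
Qed.

Lemma esg (s g : elt) : s.1 = 1%g -> (forall i, s.2 i = 1%:M) -> emul s g = g.
Proof.
move=> s1 s2; case: g => g1 g2; rewrite /emul /= s1 mulg1; congr pair.
apply/ffunP => i; rewrite ffunE s2 mul1mx.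
by have -> : (1%g : {perm 'I_n})^-1%g i = i by rewrite invg1 perm1.
Qed.

Lemma final (D g : elt) : inG H D -> inG H g ->
  act D (act (einv g) (P 1%g one)) = P 1%g one -> D = g.
Proof.
move=> DG gG; rewrite -act_emul => e.
have sG : inG H (emul D (einv g)).
  by move=> i; rewrite /emul /einv /= !ffunE; apply: HM => //; apply: HV.
have [e1 e2] := stab_triv (conj sG e).
have D1 : D.1 = g.1.
  by move: e1 => /= e1; rewrite -(mulVKg g.1 D.1) e1 mulg1.
have D2 : forall i, D.2 i = g.2 i.
  move=> i; have := e2 i; rewrite /emul /einv /= !ffunE D1 permKV => ei.
  by rewrite -(mulmxKV (unitH (gG i)) (D.2 i)) ei mul1mx.
clear e e1 e2 sG DG.
move: D1 D2; case: D => a1 a2; case: g gG => g1 g2 gG /= -> D2.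
by congr pair; apply/ffunP => i; rewrite D2.
Qed.

Lemma main_sec : decodes_robustly H ordr x0.
Proof.
move=> g r gG hyp.
pose bg := fun i => invmx (g.2 (g.1 i)).
have bgH : inorb bg by move=> i; apply: HV.
have z0E : act (einv g) (P 1%g one) = P g.1 bg.
  rewrite actP /= invgK mulg1; apply: P_ext => i.
  by rewrite ffunE /one mulmx1.
have vor0 : VOR r (P g.1 bg).
  move=> t b bH ne.
  pose h : elt := (t, [ffun j => invmx (b (t^-1%g j))]).
  have hG : inG H h by move=> j; rewrite ffunE; apply: HV.
  have hx : act (einv h) x0 = P t b.
    rewrite x0E actP /= invgK mulg1; apply: P_ext => i.
    by rewrite !ffunE permK invmxK /one mulmx1.
  have := hyp h hG.
  rewrite !vnormE ltr_sqrtC ?nnegrE ?Dd_ge0 // hx x0E z0E; apply.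
  case=> s [sG sx] hs; apply: ne.
  have [s1 s2] := stab_triv (conj sG sx).
  by rewrite -hx hs esg // x0E z0E.
have I0 : Inv (act (einv g) x0) 0 (r, eone R m n).
  exists g.1, bg; rewrite x0E z0E act_eone; do !split => //.
  by move=> i; rewrite ffunE.
have := iterInv (k := (2 * n - 1)%N) (leqnn _) I0.
case=> t [b [bH [ez [vor [DG [al so]]]]]].
have t1 : t = 1%g.
  apply: perm_inc_id => i j ij; apply: so => //.
  by rewrite /Ss; have := ltn_ord j; move: Hn; lia.
have b1 : forall i, b i = one i.
  move=> i; apply: al; rewrite /Aa; have := ltn_ord i.
  by case: eqP => k0; move: Hn; lia.
have Dg : (foldl stepF (r, eone R m n) (iota 1 (2 * n - 1))).2 = g.
  apply: final => //.
  by rewrite -x0E ez t1 (P_ext _ b1) x0E.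
exists (eone R m n).
  split; first by move=> i; rewrite ffunE.
  exact: act_eone.
rewrite esg //= => i; exact: ffunE.
Qed.

End Main.

Theorem mainTheorem14 (R : realType) (m n : nat)
  (H : seq 'M[R[i]]_m) (v0 : 'cV[R[i]]_m) (u : 'I_n -> R[i])
  (ordr : nat -> seq (elt R m n)) :
  (0 < m)%N -> (0 < n)%N ->
  (* H is a finite unitary subgroup of GL_m(C) *)
  1%:M \in H ->
  (forall a b, a \in H -> b \in H -> a *m b \in H) ->
  (forall a, a \in H -> invmx a \in H) ->
  (forall a, a \in H -> a *m ctmx a = 1%:M) ->
  (* v0 is a unit vector and the identity is the unique h in H minimizing |h v0 - v0| *)
  cnorm v0 = 1 ->
  (forall h, h \in H -> h != 1%:M -> cnorm (1%:M *m v0 - v0) < cnorm (h *m v0 - v0)) ->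
  (* 0 < u_1 < ... < u_n reals, |x0| = 1 *)
  (forall i, 0 < u i) ->
  (forall i j : 'I_n, (i < j)%N -> u i < u j) ->
  vnorm (fun i => u i *: v0) = 1 ->
  (* ordr k is a fixed ordering of CL(G_k/G_{k-1}) *)
  (forall k, (1 <= k <= 2 * n - 1)%N ->
     uniq (ordr k) /\ (forall d, d \in ordr k <-> inCL H k d)) ->
  decodes_robustly H ordr (fun i => u i *: v0).
Proof.
move=> Hm Hn H1 HM HV HU Hv0 Huniq Hupos Huinc _ Hordr.
exact: (main_sec H1 HM HV HU Hv0 Huniq Hupos Huinc Hn Hordr).
Qed.
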